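(* For every integer $n\ge0$, $$\sum_{k=0}^n\frac{\binom{n}{k}(-1)^k}{4k+1}=\frac{1}{4n+1}\cdot\frac{(-1)^n}{\binom{-1/4}{n}},\qquad \sum_{k=0}^n\frac{\binom{n}{k}(-1)^k}{4k+1}H_k=-\frac{1}{4n+1}\cdot\frac{(-1)^n}{\binom{-1/4}{n}}\sum_{k=1}^n\frac{\binom{-1/4}{k}(-1)^k}{k},$$ and $$\sum_{k=0}^n\frac{\binom{n}{k}(-1)^k}{4k+3}=\frac{(-1)^n}{(4n+3)\binom{-3/4}{n}},\qquad \sum_{k=0}^n\frac{\binom{n}{k}(-1)^kH_k}{4k+3}=-\frac{(-1)^n}{(4n+3)\binom{-3/4}{n}}\sum_{k=1}^n\frac{\binom{-3/4}{k}(-1)^k}{k}.$$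
   Context: $H_k=\sum_{i=1}^k1/i$ with $H_0=0$; for rational $a$, $\binom{a}{k}=a(a-1)\cdots(a-k+1)/k!$. *)

(* Defs.v *)
From mathcomp Require Import all_boot all_order all_algebra.
Set Implicit Arguments. Unset Strict Implicit. Unset Printing Implicit Defensive.
Import Order.TTheory GRing.Theory Num.Theory.
Local Open Scope ring_scope.

Definition harmonic (k : nat) : rat := \sum_(1 <= i < k.+1) (i%:R)^-1.

Definition gbinom (a : rat) (k : nat) : rat :=
  (\prod_(i < k) (a - i%:R)) / (k`!)%:R.

(* Main.v *)
Require Import Defs.
From mathcomp Require Import all_boot all_order all_algebra.
From mathcomp Require Import ring lra.
Import Order.TTheory GRing.Theory Num.Theory.
Local Open Scope ring_scope.

Lemma pascal_alt n (f : nat -> rat) :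
  \sum_(0 <= k < n.+2) ('C(n.+1, k)%:R * (-1) ^+ k * f k)
  = \sum_(0 <= k < n.+1) ('C(n, k)%:R * (-1) ^+ k * (f k - f k.+1)).
Proof.
rewrite big_nat_recl //=.
under eq_bigr => k _ do rewrite binS natrD mulrDl mulrDl.
rewrite big_split /=.
rewrite [X in _ + (X + _)]big_nat_recr //= (bin_small (ltnSn n)) mul0r mul0r addr0.
have -> : \sum_(0 <= i < n) ('C(n, i.+1)%:R * (-1) ^+ i.+1 * f i.+1 : rat)
   = \sum_(0 <= i < n.+1) ('C(n, i)%:R * (-1) ^+ i * f i) - f 0%N.
  by rewrite [in RHS]big_nat_recl //= bin0 expr0; ring.
rewrite bin0 expr0.
under [X in _ = X]eq_bigr => k _ do rewrite mulrBr.
rewrite sumrB.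
have -> : \sum_(0 <= i < n.+1) ('C(n, i)%:R * (-1) ^+ i.+1 * f i.+1 : rat)
  = - \sum_(0 <= i < n.+1) ('C(n, i)%:R * (-1) ^+ i * f i.+1).
  by rewrite -sumrN; apply: eq_bigr => i _; rewrite exprS mulN1r mulrN mulNr.
ring.
Qed.

Lemma alt_zero n :
  \sum_(0 <= k < n.+2) ('C(n.+1, k)%:R * (-1) ^+ k : rat) = 0.
Proof.
have := pascal_alt n (fun _ => 1).
under eq_bigr do rewrite mulr1.
move=> ->; apply: big1 => i _; by rewrite subrr mulr0.
Qed.

Lemma rec_gen (b c : rat) (w : nat -> rat) n
  (hbc : forall k, b * k%:R + c != 0) :
  (b * (n.+1)%:R + c) * \sum_(0 <= k < n.+2) ('C(n.+1, k)%:R * (-1) ^+ k * w k / (b * k%:R + c))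
  = \sum_(0 <= k < n.+2) ('C(n.+1, k)%:R * (-1) ^+ k * w k)
    + b * (n.+1)%:R * \sum_(0 <= k < n.+1) ('C(n, k)%:R * (-1) ^+ k * w k / (b * k%:R + c)).
Proof.
have -> : \sum_(0 <= k < n.+1) ('C(n, k)%:R * (-1) ^+ k * w k / (b * k%:R + c))
  = \sum_(0 <= k < n.+2) ('C(n, k)%:R * (-1) ^+ k * w k / (b * k%:R + c)).
  by rewrite [in RHS]big_nat_recr //= (bin_small (ltnSn n)) !mul0r addr0.
rewrite !mulr_sumr -big_split /=.
apply: eq_big_nat => k /andP[_ hk].
have hn : (n.+1)%:R != 0 :> rat by rewrite pnatr_eq0.
have e : ('C(n, k)%:R : rat) = ((n.+1)%:R - k%:R) * 'C(n.+1, k)%:R / (n.+1)%:R.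
  rewrite -natrB; last by rewrite -ltnS.
  rewrite -natrM -(mul_bin_down n.+1 k) natrM /=; field.
  by rewrite addrC natr1.
rewrite e; field; rewrite ?hbc ?(addrC 1) ?natr1 //.
Qed.

Ltac addpos := repeat match goal with |- context[?t] => lazymatch t with _%:R => assert_fails (assert (0 <= t) by assumption); have : 0 <= t by apply: ler0n end; intro end.
Ltac nz1 := first [ assumption | apply: lt0r_neq0; addpos; lra | apply: ltr0_neq0; addpos; lra ].
Ltac nz := repeat (apply/andP; split); nz1.

Definition Dsum (b c : rat) n := \sum_(0 <= k < n.+1) ('C(n, k)%:R * (-1) ^+ k * 1 / (b * k%:R + c)).
Definition Esum (b c : rat) n := \sum_(0 <= k < n.+1) ('C(n, k)%:R * (-1) ^+ k * harmonic k / (b * k%:R + c)).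

Lemma D_rec b c n (hbc : forall k, b * k%:R + c != 0) :
  (b * (n.+1)%:R + c) * Dsum b c n.+1 = b * (n.+1)%:R * Dsum b c n.
Proof.
rewrite /Dsum rec_gen //.
under eq_bigr do rewrite mulr1.
by rewrite alt_zero add0r.
Qed.

Lemma hbc11 k : 1 * k%:R + 1 != 0 :> rat.
Proof. by apply: lt0r_neq0; have := ler0n rat k; lra. Qed.

Lemma D11 n : Dsum 1 1 n = 1 / (n.+1)%:R.
Proof.
elim: n => [|n IH].
  by rewrite /Dsum big_nat1 /= bin0 expr0 mulr0 add0r !mul1r.
have h := D_rec 1 1 n hbc11.
have hn : (n.+2)%:R != 0 :> rat by rewrite pnatr_eq0.
apply: (mulfI (x := 1 * (n.+1)%:R + 1)); first by apply: lt0r_neq0; have := ler0n rat n.+1; lra.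
rewrite h IH; field; nz.
Qed.

Lemma harmS k : harmonic k.+1 = harmonic k + ((k.+1)%:R)^-1.
Proof. by rewrite /harmonic big_nat_recr. Qed.

Lemma alt_H n :
  \sum_(0 <= k < n.+2) ('C(n.+1, k)%:R * (-1) ^+ k * harmonic k) = - (1 / (n.+1)%:R) :> rat.
Proof.
rewrite pascal_alt -D11 /Dsum -sumrN.
apply: eq_bigr => k _.
rewrite harmS opprD addrA subrr add0r mulr1 mulrN.
have -> : (k.+1%:R : rat) = 1 * k%:R + 1 by ring.
by [].
Qed.

Lemma E_rec b c n (hbc : forall k, b * k%:R + c != 0) :
  (b * (n.+1)%:R + c) * Esum b c n.+1 = - (1 / (n.+1)%:R) + b * (n.+1)%:R * Esum b c n.
Proof. by rewrite /Esum rec_gen // alt_H. Qed.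


Lemma gbinom0 a : gbinom a 0 = 1.
Proof. by rewrite /gbinom big_ord0 fact0 divr1. Qed.

Lemma gbinom_S a n : gbinom a n.+1 = gbinom a n * (a - n%:R) / (n.+1)%:R.
Proof.
rewrite /gbinom big_ord_recr factS natrM invfM /=.
set P := \prod_(i < n) _.
set F := (n`!)%:R.
set N := (n.+1)%:R.
ring.
Qed.

Lemma gbinom_neq0 (c : rat) n (hc : 0 < c) : gbinom (- (c / 4)) n != 0.
Proof.
elim: n => [|n IH]; first by rewrite gbinom0 oner_neq0.
rewrite gbinom_S; apply: mulf_neq0; last by rewrite invr_neq0 // pnatr_eq0.
apply: mulf_neq0 => //.
apply: ltr0_neq0; have := ler0n rat n; lra.
Qed.

Lemma hbc4 (c : rat) (hc : 0 < c) k : 4 * k%:R + c != 0.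
Proof. nz. Qed.

Lemma Dclosed (c : rat) n (hc : 0 < c) :
  Dsum 4 c n = (-1) ^+ n / ((4 * n%:R + c) * gbinom (- (c / 4)) n).
Proof.
elim: n => [|n IH].
  rewrite /Dsum big_nat1 gbinom0 /= bin0 expr0 mulr0 add0r.
  by rewrite !mul1r mulr1.
have h := D_rec 4 c n (hbc4 c hc).
have g := gbinom_neq0 c n hc.
apply: (mulfI (hbc4 c hc n.+1)).
rewrite h IH gbinom_S exprS.
field; nz.
Qed.


Definition Qs (c : rat) n := \sum_(1 <= k < n.+1) (gbinom (- (c / 4)) k * (-1) ^+ k / k%:R).

Lemma Eclosed (c : rat) n (hc : 0 < c) :
  Esum 4 c n = - ((-1) ^+ n / ((4 * n%:R + c) * gbinom (- (c / 4)) n)) * Qs c n.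
Proof.
elim: n => [|n IH].
  by rewrite /Esum /Qs big_nat1 big_geq // /harmonic big_geq // !mulr0 mul0r.
have h := E_rec 4 c n (hbc4 c hc).
have g := gbinom_neq0 c n hc.
apply: (mulfI (hbc4 c hc n.+1)).
rewrite h IH /Qs [X in _ = _ * (_ * X)]big_nat_recr //= -/(Qs c n) gbinom_S !exprS.
rewrite -signr_odd; case: (odd n); rewrite ?expr0 ?expr1; field; nz.
Qed.

Theorem mainTheorem8 (n : nat) :
  [/\ \sum_(0 <= k < n.+1) ('C(n, k)%:R * (-1) ^+ k / (4 * k%:R + 1) : rat)
        = 1 / (4 * n%:R + 1) * ((-1) ^+ n / gbinom (- (1/4)) n),
      \sum_(0 <= k < n.+1) ('C(n, k)%:R * (-1) ^+ k / (4 * k%:R + 1) * harmonic k : rat)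
        = - (1 / (4 * n%:R + 1) * ((-1) ^+ n / gbinom (- (1/4)) n))
          * \sum_(1 <= k < n.+1) (gbinom (- (1/4)) k * (-1) ^+ k / k%:R),
      \sum_(0 <= k < n.+1) ('C(n, k)%:R * (-1) ^+ k / (4 * k%:R + 3) : rat)
        = (-1) ^+ n / ((4 * n%:R + 3) * gbinom (- (3/4)) n)
    & \sum_(0 <= k < n.+1) ('C(n, k)%:R * (-1) ^+ k * harmonic k / (4 * k%:R + 3) : rat)
        = - ((-1) ^+ n / ((4 * n%:R + 3) * gbinom (- (3/4)) n))
          * \sum_(1 <= k < n.+1) (gbinom (- (3/4)) k * (-1) ^+ k / k%:R)].
Proof.
have h1 : (0 : rat) < 1 by [].
have h3 : (0 : rat) < 3 by [].
have g1 := gbinom_neq0 1 n h1.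
have g3 := gbinom_neq0 3 n h3.
split.
- have := Dclosed 1 n h1; rewrite /Dsum.
  under eq_bigr do rewrite mulr1.
  move=> ->; field; nz.
- have := Eclosed 1 n h1; rewrite /Esum /Qs.
  under eq_bigr do rewrite mulrAC.
  move=> ->; congr (_ * _); congr (- _); field; nz.
- have := Dclosed 3 n h3; rewrite /Dsum.
  under eq_bigr do rewrite mulr1.
  by [].
- exact: Eclosed 3 n h3.
Qed.
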